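(* Let $G$ be an arbitrary graph and let $B$ be a bipartite graph that is dispersable. Then $\mathrm{mbt}(G\Box B)\leq \mathrm{mbt}(G)+\Delta(B)$.
   Context: A book embedding of a graph $G$ consists of a linear ordering of $V(G)$ (the vertices placed on the spine) together with an assignment of each edge to one of a set of pages such that no two edges on the same page cross, i.e. there are no two edges $uv$, $xy$ on the same page with $u<x<v<y$ in the ordering. A book embedding is matching if on every page each vertex is incident with at most one edge of that page. The matching book thickness $\mathrm{mbt}(G)$ is the minimum number of pages over all matching book embeddings of $G$. $\Delta(G)$ denotes the maximum degree of $G$. A graph $G$ is dispersable if $\mathrm{mbt}(G)=\Delta(G)$. The Cartesian product $G\Box B$ has vertex set $V(G)\times V(B)$, with $(u_1,v_1)$ adjacent to $(u_2,v_2)$ iff either $u_1=u_2$ and $v_1v_2\in E(B)$, or $v_1=v_2$ and $u_1u_2\in E(G)$. *)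

(* Defs.v *)
From mathcomp Require Import all_boot.
Set Implicit Arguments. Unset Strict Implicit. Unset Printing Implicit Defensive.

Definition simple_graph (T : finType) (e : rel T) : Prop :=
  symmetric e /\ irreflexive e.

Definition maxdeg (T : finType) (e : rel T) : nat :=
  \max_(v : T) #|[set w | e v w]|.

Definition bipartite (T : finType) (e : rel T) : Prop :=
  exists f : T -> bool, forall u v, e u v -> f u != f v.

Definition cart_rel (T1 T2 : finType) (eG : rel T1) (eB : rel T2) : rel (T1 * T2) :=
  fun x y => ((x.1 == y.1) && eB x.2 y.2) || ((x.2 == y.2) && eG x.1 y.1).

(* A matching book embedding of (T, e) with k pages:
   pos is the linear ordering of the vertices along the spine (injective),
   pg assigns to each edge {u,v} a page pg u v = pg v u < k; no two edges
   on the same page cross, and on each page every vertex meets at most one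
   edge of that page. *)
Definition matching_book_embedding (T : finType) (e : rel T) (k : nat) : Prop :=
  exists (pos : T -> nat) (pg : T -> T -> nat),
    [/\ injective pos,
        (forall u v, e u v -> pg u v = pg v u /\ pg u v < k),
        (forall u v x y, e u v -> e x y -> pg u v = pg x y ->
            ~ [/\ pos u < pos x, pos x < pos v & pos v < pos y]) &
        (forall u v w, e u v -> e u w -> v != w -> pg u v <> pg u w)].

Definition is_mbt (T : finType) (e : rel T) (m : nat) : Prop :=
  matching_book_embedding e m /\
  (forall k, matching_book_embedding e k -> m <= k).

Definition dispersable (T : finType) (e : rel T) : Prop :=
  is_mbt e (maxdeg e).

(* Main.v *)
Require Import Defs.
From mathcomp Require Import all_boot zify.

Lemma lexP a a' r r' M : r <= M -> r' <= M -> a * M.+1 + r < a' * M.+1 + r' -> a < a' \/ a = a' /\ r < r'.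
Proof. move=> h1 h2 h3. have [h|h|h] := ltngtP a a'.
- by left.
- exfalso. have : a' * M.+1 + M.+1 <= a * M.+1 by rewrite -mulSnr leq_mul2r h orbT. lia.
- right; subst; split; [done|lia].
Qed.
Lemma lexE a a' r r' M : r <= M -> r' <= M -> a * M.+1 + r = a' * M.+1 + r' -> a = a' /\ r = r'.
Proof. move=> h1 h2 h3. have [h|h|h] := ltngtP a a'.
- have : a * M.+1 + M.+1 <= a' * M.+1 by rewrite -mulSnr leq_mul2r h orbT. lia.
- have : a' * M.+1 + M.+1 <= a * M.+1 by rewrite -mulSnr leq_mul2r h orbT. lia.
- subst; lia.
Qed.

Lemma cartP (TG TB : finType) (eG : rel TG) (eB : rel TB) u1 u2 v1 v2 :
  cart_rel eG eB (u1, u2) (v1, v2) -> (u1 = v1 /\ eB u2 v2) \/ (u2 = v2 /\ eG u1 v1).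
Proof.
rewrite /cart_rel /=. case/orP=> /andP[/eqP-> h]; [left|right]; done.
Qed.

Theorem lemma2p5 (TG TB : finType) (eG : rel TG) (eB : rel TB)
  (mG mGB : nat) :
  simple_graph eG -> simple_graph eB ->
  bipartite eB -> dispersable eB ->
  is_mbt eG mG -> is_mbt (cart_rel eG eB) mGB ->
  mGB <= mG + maxdeg eB.
Proof.
move=> [symG irrG] [symB irrB] [f fB] [[posB [pgB [injB pgBok crossB matchB]]] _].
move=> [[posG [pgG [injG pgGok crossG matchG]]] _] [_ minGB].
apply: minGB.
set M := \max_(u : TG) posG u.
have HM : forall u, posG u <= M := fun u => @leq_bigmax _ posG u.
pose o (x : TG * TB) := if f x.2 then posG x.1 else M - posG x.1.
have ho : forall x, o x <= M by move=> x; rewrite /o; case: ifP => _; [exact: HM|lia].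
have hoT : forall a b, f b -> o (a, b) = posG a by move=> a b hb; rewrite /o /= hb.
have hoF : forall a b, ~~ f b -> o (a, b) = M - posG a by move=> a b hb; rewrite /o /= (negbTE hb).
pose pos (x : TG * TB) := posB x.2 * M.+1 + o x.
pose pg (x y : TG * TB) := if x.1 == y.1 then mG + pgB x.2 y.2 else pgG x.1 y.1.
have pgBE : forall a b c, pg (a, b) (a, c) = mG + pgB b c by move=> a b c; rewrite /pg /= eqxx.
have pgGE : forall a b c, eG a c -> pg (a, b) (c, b) = pgG a c.
  move=> a b c h; rewrite /pg /=; case: eqP => // e; by rewrite e irrG in h.
have neB : forall b c, eB b c -> posB b <> posB c.
  by move=> b c h /injB e; rewrite e irrB in h.
exists pos, pg; split.
- move=> [x1 x2] [y1 y2]; rewrite /pos /= => /lexE -/(_ (ho _) (ho _)) [/injB e2 e1].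
  subst y2; congr pair; apply: injG; move: e1.
  case hb: (f x2); [by rewrite !hoT|rewrite !hoF ?hb //; have := HM x1; have := HM y1; lia].
- move=> [u1 u2] [v1 v2] /cartP [[<- h]|[<- h]].
  + rewrite !pgBE; have [-> ?] := pgBok _ _ h; split=>//; lia.
  + rewrite !pgGE //; last by rewrite symG.
    have [-> ?] := pgGok _ _ h; split=>//; lia.
- have Ho : forall a b, o (a, b) = if f b then posG a else M - posG a by [].
  move=> [u1 u2] [v1 v2] [x1 x2] [y1 y2] /cartP [[<- h1]|[<- h1]] /cartP [[<- h2]|[<- h2]].
  + rewrite !pgBE => /addnI e [H1 H2 H3].
    move: H1 H2 H3; rewrite /pos /=.
    move=> H1 H2 H3; have L1 := @lexP _ _ _ _ _ (ho _) (ho _) H1; have L2 := @lexP _ _ _ _ _ (ho _) (ho _) H2; have L3 := @lexP _ _ _ _ _ (ho _) (ho _) H3.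
    have nuv := neB _ _ h1; have nxy := neB _ _ h2.
    case: (posB u2 =P posB x2) => [/injB E1 | N1].
      subst x2.
      have E2 : v2 = y2.
        apply/eqP; apply/negPn/negP => hne; exact: (matchB _ _ _ h1 h2 hne e).
      subst y2.
      case: L1 => [|[_ L1]]; first lia. case: L3 => [|[_ L3]]; first lia.
      have := fB _ _ h1; move: L1 L3; rewrite !Ho.
      have := HM u1; have := HM x1.
      case: (f u2); case: (f v2) => //; lia.
    case: (posB v2 =P posB y2) => [/injB E3|N3].
      subst y2.
      have hne : u2 != x2 by apply/eqP => E; apply: N1; rewrite E.
      apply: (matchB v2 u2 x2 _ _ hne); [by rewrite symB|by rewrite symB|].
      have [E1 _] := pgBok _ _ h1; have [E2 _] := pgBok _ _ h2; by rewrite -E1 e E2.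
    case: (posB x2 =P posB v2) => [/injB E2|N2].
      subst x2.
      have hne : u2 != y2 by apply/eqP => E; subst y2; lia.
      apply: (matchB _ _ _ _ h2 hne); first by rewrite symB.
      have [E1 _] := pgBok _ _ h1; by rewrite -E1 e.
    apply: (crossB _ _ _ _ h1 h2 e); split; lia.
  + rewrite pgBE pgGE // => e; have := pgGok _ _ h2; lia.
  + rewrite pgBE pgGE // => e; have := pgGok _ _ h1; lia.
  + rewrite !pgGE // => e [H1 H2 H3].
    move: H1 H2 H3; rewrite /pos /=.
    move=> H1 H2 H3; have L1 := @lexP _ _ _ _ _ (ho _) (ho _) H1; have L2 := @lexP _ _ _ _ _ (ho _) (ho _) H2; have L3 := @lexP _ _ _ _ _ (ho _) (ho _) H3.
    have E : posB u2 = posB x2 by lia.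
    move/injB: E => E; subst x2.
    case: L1 => [|[_ L1]]; first lia. case: L2 => [|[_ L2]]; first lia.
    case: L3 => [|[_ L3]]; first lia.
    move: L1 L2 L3; rewrite !Ho.
    have := HM u1; have := HM x1; have := HM v1; have := HM y1.
    case: (f u2) => ? ? ? ? L1 L2 L3.
      by apply: (crossG _ _ _ _ h1 h2 e); split.
    apply: (crossG y1 x1 v1 u1); [by rewrite symG|by rewrite symG| |split; lia].
    have [E1 _] := pgGok _ _ h1; have [E2 _] := pgGok _ _ h2; by rewrite -E2 -E1 e.
- move=> [u1 u2] [v1 v2] [w1 w2] /cartP [[<- h1]|[<- h1]] /cartP [[<- h2]|[<- h2]] hne.
  + rewrite !pgBE => e; apply: (matchB _ _ _ h1 h2); last lia.
    by apply: contra hne => /eqP->.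
  + rewrite pgBE pgGE //; have := pgGok _ _ h2; lia.
  + rewrite pgBE pgGE //; have := pgGok _ _ h1; lia.
  + rewrite !pgGE // => e; apply: (matchG _ _ _ h1 h2 _ e).
    by apply: contra hne => /eqP->.
Qed.
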